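(* Let $M(i)$ be a maximal matching of $G(i)$ and let $V_{cover}(i)$ be the set of endpoints of edges of $M(i)$, which is a $2$-approximate minimum vertex cover of $G(i)$. If $i\le j\le i+\frac14|M(i)|$, then $V_{cover}(i\rightarrow j)$ is a $5$-approximation to the minimum vertex cover of $G(j)$.
   Context: A graph undergoes a sequence of updates numbered $1,2,\dots$, each inserting or deleting one edge; $G(i)$ is the graph after the $i$-th update. A matching is maximal if no edge of the graph has both endpoints unmatched. $V_{cover}(i\rightarrow j)$ is obtained from $V_{cover}(i)$ by adding all endpoints of edges inserted during updates $i+1,\dots,j$; it is a vertex cover of $G(j)$. A set is an $\alpha$-approximation to the minimum vertex cover if it is a vertex cover of size at most $\alpha$ times the minimum vertex cover size. *)

(* Defs.v *)
From mathcomp Require Import all_boot.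
Set Implicit Arguments. Unset Strict Implicit. Unset Printing Implicit Defensive.

Definition simple_graph (T : finType) (G : {set {set T}}) : Prop :=
  forall e, e \in G -> #|e| = 2.

Record update (T : finType) := Update { upd_ins : bool; upd_edge : {set T} }.

Definition apply_update (T : finType) (u : update T) (G : {set {set T}}) :=
  if upd_ins u then G :|: [set upd_edge u] else G :\ upd_edge u.

Definition valid_update (T : finType) (u : update T) (G : {set {set T}}) : Prop :=
  #|upd_edge u| = 2 /\
  (if upd_ins u then upd_edge u \notin G else upd_edge u \in G).

Definition endpoints (T : finType) (M : {set {set T}}) : {set T} :=
  \bigcup_(e in M) e.

Definition is_matching (T : finType) (G M : {set {set T}}) : Prop :=
  M \subset G /\
  (forall e f, e \in M -> f \in M -> e != f -> [disjoint e & f]).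

Definition is_maximal_matching (T : finType) (G M : {set {set T}}) : Prop :=
  is_matching G M /\
  (forall e, e \in G -> ~~ (e \subset ~: endpoints M)).

Definition is_vertex_cover (T : finType) (G : {set {set T}}) (C : {set T}) : bool :=
  [forall e in G, e :&: C != set0].

Definition min_vc_size (T : finType) (G : {set {set T}}) : nat :=
  \big[minn/#|T|]_(C : {set T} | is_vertex_cover G C) #|C|.

Definition vc_approx (T : finType) (alpha : nat) (G : {set {set T}}) (C : {set T}) : Prop :=
  is_vertex_cover G C /\ #|C| <= alpha * min_vc_size G.

(* V_cover(i -> j): Vc plus all endpoints of edges inserted during
   updates i+1, ..., j (update k transforms G(k-1) into G(k)). *)
Definition cover_ext (T : finType) (upd : nat -> update T) (Vc : {set T}) (i j : nat)
  : {set T} :=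
  Vc :|: \bigcup_(i.+1 <= k < j.+1 | upd_ins (upd k)) upd_edge (upd k).

(* Main.v *)
Require Import Defs.
From mathcomp Require Import all_boot.
From mathcomp Require Import zify.

Set Implicit Arguments. Unset Strict Implicit.

Lemma card_bigcup_leq (T : finType) (I : Type) (r : seq I) (P : pred I) (F : I -> {set T}) :
  #|\bigcup_(k <- r | P k) F k| <= \sum_(k <- r | P k) #|F k|.
Proof.
apply: (big_ind2 (fun (A : {set T}) n => #|A| <= n)).
- by rewrite cards0.
- move=> A m B n HA HB. apply: leq_trans (leq_add HA HB).
  by rewrite cardsU leq_subr.
- by [].
Qed.

Lemma matching_le_cover (T : finType) (N : {set {set T}}) (C : {set T}) :
  (forall e f, e \in N -> f \in N -> e != f -> [disjoint e & f]) ->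
  (forall e, e \in N -> e :&: C != set0) ->
  #|N| <= #|C|.
Proof.
move=> Hd Hc.
have [-> | [e0 He0]] := set_0Vmem N; first by rewrite cards0.
case: (set_0Vmem (e0 :&: C)) => [E|[x0' Hx0']]; first by move: (Hc e0 He0); rewrite E eqxx.
pose f e := odflt x0' [pick x in e :&: C].
have fP : forall e, e \in N -> f e \in e :&: C.
  move=> e He; rewrite /f; case: pickP => [x Hx //|H].
  case: (set_0Vmem (e :&: C)) => [E|[y Hy]]; first by move: (Hc e He); rewrite E eqxx.
  by move: (H y); rewrite Hy.
have inj : {in N &, injective f}.
  move=> e g He Hg Hfe; apply/eqP; apply/negPn/negP => Hne.
  have := Hd e g He Hg Hne; rewrite disjoint_subset => /subsetP /(_ (f e)).
  move: (fP e He) (fP g Hg); rewrite !inE -Hfe => /andP[H1 _] /andP[H2 _].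
  by move=> /(_ H1); rewrite H2.
rewrite -(card_in_imset inj); apply: subset_leq_card; apply/subsetP => y /imsetP[e He ->].
by move: (fP e He); rewrite inE => /andP[].
Qed.

Lemma mem_bigcup_seq (T : finType) (r : seq nat) (P : pred nat) (F : nat -> {set T}) k x :
  k \in r -> P k -> x \in F k -> x \in \bigcup_(k <- r | P k) F k.
Proof.
move=> Hk HP Hx; elim: r Hk => [//|a r IH]; rewrite inE big_cons => /orP[/eqP <-|Hk].
  by rewrite HP inE Hx.
by case: (P a); rewrite ?inE IH ?orbT.
Qed.

Section L.
Variables (T : finType) (G : nat -> {set {set T}}) (upd : nat -> update T).
Hypothesis HG0 : simple_graph (G 0).
Hypothesis Hvalid : forall k, valid_update (upd k.+1) (G k).
Hypothesis Hstep : forall k, G k.+1 = apply_update (upd k.+1) (G k).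

Lemma simple_all k : simple_graph (G k).
Proof.
elim: k => [//|k IH] e; rewrite Hstep /apply_update.
case: (Hvalid k) => H2 _.
case: ifP => _; rewrite !inE.
- by case/orP => [/IH|/eqP -> ].
- by case/andP => _ /IH.
Qed.

Lemma mem_G i j e : i <= j -> e \in G j ->
  e \in G i \/ exists2 k, i < k <= j & (upd_ins (upd k) /\ upd_edge (upd k) = e).
Proof.
move=> Hij; elim: j Hij e => [|j IH] Hij e.
  by rewrite leqn0 in Hij; move/eqP: Hij => ->; left.
rewrite leq_eqVlt in Hij; case/orP: Hij => [/eqP <- | Hij]; first by left.
rewrite Hstep /apply_update; case: ifP => Hins; rewrite !inE.
- case/orP => [He | /eqP ->]; last first.
    right; exists j.+1 => //; by rewrite Hij leqnn.
  case: (IH Hij e He) => [|[k Hk Hk2]]; [by left | right; exists k => //].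
  by case/andP: Hk => -> /leqW.
- case/andP => _ He.
  case: (IH Hij e He) => [|[k Hk Hk2]]; [by left | right; exists k => //].
  by case/andP: Hk => -> /leqW.
Qed.

Lemma deleted_le i j (M : {set {set T}}) : i <= j -> M \subset G i ->
  #|M :\: G j| <= j - i.
Proof.
move=> Hij HM; elim: j Hij => [|j IH] Hij.
  rewrite leqn0 in Hij; move/eqP: Hij => Hi; subst i.
  rewrite (_ : M :\: G 0 = set0) ?cards0 //.
  by apply/eqP; rewrite setD_eq0.
rewrite leq_eqVlt in Hij; case/orP: Hij => [/eqP Hi | Hij].
  subst i; rewrite (_ : M :\: G j.+1 = set0) ?cards0 //.
  by apply/eqP; rewrite setD_eq0.
have := IH Hij.
have sub : M :\: G j.+1 \subset upd_edge (upd j.+1) |: (M :\: G j).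
  apply/subsetP => e; rewrite Hstep /apply_update !inE.
  case: ifP => _; rewrite !inE.
  - by case: (e \in G j); case: (e == _); case: (e \in M).
  - by case: (e \in G j); case: (e == _); case: (e \in M).
have := subset_leq_card sub; rewrite cardsU1 => H1 H2.
have : #|M :\: G j.+1| <= 1 + (j - i) by apply: leq_trans H1 _; apply: leq_add (leq_b1 _) H2.
lia.
Qed.

End L.

Theorem lemma12 (T : finType) (G : nat -> {set {set T}}) (upd : nat -> update T)
  (HG0 : simple_graph (G 0))
  (Hvalid : forall k, valid_update (upd k.+1) (G k))
  (Hstep : forall k, G k.+1 = apply_update (upd k.+1) (G k))
  (i j : nat) (M : {set {set T}})
  (HM : is_maximal_matching (G i) M)
  (Hij : i <= j) (Hj : 4 * j <= 4 * i + #|M|) :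
  vc_approx 5 (G j) (cover_ext upd (endpoints M) i j).
Proof.
case: HM => [[HMG Hdisj] Hmax].
have Hsimple := simple_all HG0 Hvalid Hstep.
have nonempty : forall k e, e \in G k -> e :&: setT != set0.
  move=> k e He; rewrite setIT; apply/eqP => E.
  by move: (Hsimple k e He); rewrite E cards0.
split.
  apply/forall_inP => e He.
  case: (mem_G Hstep Hij He) => [Hei | [k Hk [Hins Hke]]].
  - have := Hmax e Hei; apply: contra => /eqP E.
    apply/subsetP => x Hx; rewrite inE; apply/negP => Hx2.
    have : x \in e :&: cover_ext upd (endpoints M) i j by rewrite inE Hx /cover_ext inE Hx2.
    by rewrite E inE.
  - have := nonempty j e He; rewrite setIT; case/set0Pn => x Hx.
    apply/set0Pn; exists x; rewrite inE Hx /cover_ext inE; apply/orP; right.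
    apply: (mem_bigcup_seq (k:=k)) => //; last by rewrite Hke.
    by rewrite mem_index_iota.
set d := j - i.
have Hsz : #|cover_ext upd (endpoints M) i j| <= 2 * #|M| + 2 * d.
  rewrite /cover_ext; apply: leq_trans (leq_card_setU _ _).1 _.
  apply: leq_add.
    rewrite /endpoints; apply: leq_trans (card_bigcup_leq _ _ _) _.
    rewrite (eq_bigr (fun _ => 2)); last first.
      by move=> e He; apply: Hsimple i e (subsetP HMG e He).
    by rewrite sum_nat_const mulnC.
  apply: leq_trans (card_bigcup_leq _ _ _) _.
  apply: leq_trans (_ : \sum_(i.+1 <= k < j.+1) 2 <= _); last first.
    by rewrite sum_nat_const_nat subSS mulnC.
  rewrite big_mkcond /= big_nat_cond [X in _ <= X]big_nat_cond.
  apply: leq_sum => k /andP[/andP[Hk _] _].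
  case: (upd_ins (upd k)) => //.
  have Hk0 : k = k.-1.+1 by rewrite prednK //; apply: leq_trans Hk.
  by case: (Hvalid k.-1); rewrite -Hk0 => ->.
set N := M :&: G j.
have HN : #|M| - d <= #|N|.
  have := cardsID (G j) M; have := deleted_le Hstep Hij HMG; rewrite -/N -/d. lia.
have HNC : forall C, is_vertex_cover (G j) C -> #|N| <= #|C|.
  move=> C HC; apply: matching_le_cover.
    move=> e f; rewrite !inE => /andP[He _] /andP[Hf _]; exact: Hdisj.
  move=> e; rewrite inE => /andP[_ He]; exact: (forall_inP HC e He).
have Hmin : #|M| - d <= min_vc_size (G j).
  rewrite /min_vc_size; apply: (big_ind (fun x => #|M| - d <= x)).
  - apply: leq_trans HN _; rewrite -cardsT; apply: HNC.
    apply/forall_inP => e He; exact: nonempty j e He.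
  - by move=> x y Hx Hy; rewrite leq_min Hx Hy.
  - by move=> C HC; apply: leq_trans HN (HNC C HC).
move: Hsz Hmin Hj Hij; rewrite /d; lia.
Qed.
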